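(* Let $X$, $Y$, $Z$ be Hausdorff locally convex topological vector spaces with topological duals $X^*$, $Y^*$, $Z^*$, and let $C\subseteq Z$ be a closed convex cone with $0\in C\neq Z$. Let $f:X\times Y\to\mathcal{F}(Z,C)$ be a convex function such that $(x_0,0)\in{\rm dom\,} f$ for some $x_0\in X$. Suppose that for every $z^*\in C^-\setminus\{0\}$ the extended real-valued function $y\mapsto\varphi_{(f(x_0,\cdot),z^* )}(y)=\inf_{z\in f(x_0,y)}(-z^*(z))$ is upper semicontinuous at $0\in Y$. Then \[ f_X(0)=\bigcap_{(y^*,z^* )\in Y^*\times (C^-\setminus\{0\})}(-f^* )((0,y^* ),z^* ), \] and there exists a family $\{y^*_{z^*}\colon z^*\in C^-\setminus\{0\},\ \varphi_{(f,z^* )}\text{ is proper}\}\subseteq Y^*$ such that \[ f_X(0)=\bigcap_{\substack{z^*\in C^-\setminus\{0\}\\ \varphi_{(f,z^* )}\text{ is proper}}}(-f^* )((0,y^*_{z^*}),z^* ). \]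
   Context: $\mathcal{F}(Z,C)=\{A\subseteq Z\colon A=\operatorname{cl}(A+C)\}$ (the empty set is included). $C^-=\{z^*\in Z^*\colon z^*(z)\le 0\ \forall z\in C\}$. A function $g:W\to\mathcal{F}(Z,C)$ on a vector space $W$ is convex iff $t g(w_1)+(1-t)g(w_2)\subseteq g(tw_1+(1-t)w_2)$ for all $w_1,w_2\in W$, $t\in(0,1)$ (equivalently, its graph $\{(w,z)\colon z\in g(w)\}$ is convex). ${\rm dom\,} g=\{w\colon g(w)\neq\emptyset\}$. For $z^*\in Z^*$ the scalarization is $\varphi_{(g,z^* )}(w)=\inf_{z\in g(w)}(-z^*(z))\in\mathbb{R}\cup\{\pm\infty\}$ (with $\inf\emptyset=+\infty$); in particular $\varphi_{(f,z^* )}:X\times Y\to\overline{\mathbb{R}}$, and it is proper iff it never takes the value $-\infty$ and is not identically $+\infty$. The marginal function is $f_X(y)=\operatorname{cl}\bigcup_{x\in X}f(x,y)$. The negative conjugate of $f$ is defined for $(x^*,y^* )\in X^*\times Y^*$, $z^*\in C^-\setminus\{0\}$ by $(-f^* )((x^*,y^* ),z^* )=\operatorname{cl}\bigcup_{(x,y)\in X\times Y}\big(f(x,y)+S_{((x^*,y^* ),z^* )}(-x,-y)\big)$, where $S_{((x^*,y^* ),z^* )}(x,y)=\{z\in Z\colon x^*(x)+y^*(y)+z^*(z)\le 0\}$. *)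

(* Defs.v *)
From HB Require Import structures.
From mathcomp Require Import all_boot all_order all_algebra.
From mathcomp Require Import all_classical all_reals all_analysis.
Set Implicit Arguments. Unset Strict Implicit. Unset Printing Implicit Defensive.
Import Order.TTheory GRing.Theory Num.Theory.
Import numFieldTopology.Exports numFieldNormedType.Exports.
Local Open Scope classical_set_scope.
Local Open Scope ring_scope.

Definition is_dual (R : realType) (E : tvsType R) (l : E -> R) : Prop :=
  (forall (a : R) (u v : E), l (a *: u + v) = a * l u + l v) /\ continuous l.

Definition msum (R : realType) (E : tvsType R) (A B : set E) : set E :=
  [set a + b | a in A & b in B].

Definition closed_convex_cone (R : realType) (Z : tvsType R) (C : set Z) : Prop :=
  closed C /\ C 0 /\ (forall (t : R) z, 0 <= t -> C z -> C (t *: z)) /\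
  (forall (t : R) z1 z2, 0 <= t <= 1 -> C z1 -> C z2 -> C (t *: z1 + (1 - t) *: z2)).

Definition in_FZC (R : realType) (Z : tvsType R) (C : set Z) (A : set Z) : Prop :=
  A = closure (msum A C).

Definition setfun_convex (R : realType) (W Z : tvsType R) (g : W -> set Z) : Prop :=
  forall (w1 w2 : W) (t : R), 0 < t < 1 ->
    [set t *: z1 + (1 - t) *: z2 | z1 in g w1 & z2 in g w2]
      `<=` g (t *: w1 + (1 - t) *: w2).

Definition sdom (R : realType) (W Z : tvsType R) (g : W -> set Z) : set W :=
  [set w | g w !=set0].

Definition in_Cminus0 (R : realType) (Z : tvsType R) (C : set Z) (zs : Z -> R) : Prop :=
  is_dual zs /\ (forall z, C z -> zs z <= 0) /\ zs <> (fun _ => 0).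

Definition scalarization (R : realType) (W Z : tvsType R) (g : W -> set Z)
  (zs : Z -> R) (w : W) : extended R :=
  ereal_inf [set (- zs z)%:E | z in g w].

Definition usc_at (R : realType) (T : topologicalType) (h : T -> extended R) (x : T) : Prop :=
  forall a : R, (h x < a%:E)%E -> exists2 V, nbhs x V & forall y, V y -> (h y < a%:E)%E.

Definition eproper (R : realType) (T : Type) (h : T -> extended R) : Prop :=
  (forall w, h w <> -oo%E) /\ (exists w, h w <> +oo%E).

Definition marginalX (R : realType) (X Y Z : tvsType R) (f : X * Y -> set Z) (y : Y) : set Z :=
  closure (\bigcup_(x in [set: X]) f (x, y)).

Definition Shalf (R : realType) (X Y Z : tvsType R)
  (xs : X -> R) (ys : Y -> R) (zs : Z -> R) (x : X) (y : Y) : set Z :=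
  [set z | xs x + ys y + zs z <= 0].

Definition negconj (R : realType) (X Y Z : tvsType R) (f : X * Y -> set Z)
  (xs : X -> R) (ys : Y -> R) (zs : Z -> R) : set Z :=
  closure (\bigcup_(p in [set: X * Y])
             msum (f p) (Shalf xs ys zs (- p.1) (- p.2))).

(* Main.v *)
Require Import Defs.
From HB Require Import structures.
From mathcomp Require Import all_boot all_order all_algebra.
From mathcomp Require Import all_classical all_reals all_analysis.
Import Order.TTheory GRing.Theory Num.Theory.
Import numFieldTopology.Exports numFieldNormedType.Exports.
Local Open Scope classical_set_scope.
Local Open Scope ring_scope.
From mathcomp Require Import ring lra.
Set Implicit Arguments. Unset Strict Implicit.

Section HB.
Variables (R : realType) (E : lmodType R) (K : set E).
Hypothesis Kconv : forall x y (t : R), 0 <= t <= 1 -> K x -> K y ->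
  K (t *: x + (1 - t) *: y).
Hypothesis Kabs : forall x, exists2 s : R, 0 < s & K (s *: x).
Variable w : E.
Hypothesis Kw : ~ K w.

Definition good (G : set (E * R)) :=
  [/\ (forall x a b, G (x, a) -> G (x, b) -> a = b),
      (forall t x y a b, G (x, a) -> G (y, b) -> G (t *: x + y, t * a + b)),
      (forall x a, G (x, a) -> K x -> a <= 1) &
      G (w, 1)].

Lemma gfun G : good G -> forall x a b, G (x, a) -> G (x, b) -> a = b.
Proof. by case. Qed.
Lemma glin G : good G -> forall t x y a b, G (x, a) -> G (y, b) -> G (t *: x + y, t * a + b).
Proof. by case. Qed.
Lemma gle G : good G -> forall x a, G (x, a) -> K x -> a <= 1.
Proof. by case. Qed.
Lemma gw G : good G -> G (w, 1).
Proof. by case. Qed.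

Arguments gfun {G}. Arguments glin {G}. Arguments gle {G}. Arguments gw {G}.

Lemma K0 : K 0.
Proof. by have [s _] := Kabs 0; rewrite scaler0. Qed.

Lemma good00 G : good G -> G (0, 0).
Proof.
case=> _ G2 _ G4; have := G2 (-1) _ _ _ _ G4 G4.
by rewrite scaleN1r addNr mulN1r addNr.
Qed.

Arguments good00 {G}.

Lemma goodZ G t x a : good G -> G (x, a) -> G (t *: x, t * a).
Proof.
move=> gG Gx; have := (glin gG t _ _ _ _ Gx (good00 gG)).
by rewrite addr0 addr0.
Qed.

Arguments goodZ {G}.

Definition PG (G : set (E * R)) := G = set0 \/ good G.

Lemma PG_good G p : PG G -> G p -> good G.
Proof. by case=> // -> . Qed.

Arguments PG_good {G p}.

Lemma chain_PG : forall F : set (set (E * R)),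
   F `<=` PG -> total_on F subset -> PG (\bigcup_(X in F) X).
Proof.
move=> F FP Ftot.
case: (pselect ((\bigcup_(X in F) X) !=set0)) => [[q Uq]|U0]; last first.
  by left; apply/seteqP; split => // p Up; apply: U0; exists p.
right.
have both : forall p1 p2, (\bigcup_(X in F) X) p1 -> (\bigcup_(X in F) X) p2 ->
    exists G, [/\ F G, good G, G p1 & G p2].
  move=> p1 p2 [G1 FG1 G1p] [G2 FG2 G2p].
  have [s12|s21] := Ftot _ _ FG1 FG2.
  - by exists G2; split => //; [exact: (PG_good (FP _ FG2) G2p)| exact: s12].
  - by exists G1; split => //; [exact: (PG_good (FP _ FG1) G1p)| exact: s21].
split.
- move=> x a b Ua Ub; have [G [_ gG Ga Gb]] := both _ _ Ua Ub.
  exact: gfun gG _ _ _ Ga Gb.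
- move=> t x y a b Ua Ub; have [G [FG gG Ga Gb]] := both _ _ Ua Ub.
  by exists G => //; exact: glin gG _ _ _ _ _ Ga Gb.
- move=> x a [G FG Ga]; exact: gle (PG_good (FP _ FG) Ga) _ _ Ga.
- case: Uq => G FG Gq; exists G => //; exact: gw (PG_good (FP _ FG) Gq).
Qed.

Lemma HB_alg : exists l : E -> R,
  (forall (a : R) u v, l (a *: u + v) = a * l u + l v) /\
  (forall x, K x -> l x <= 1) /\ l w = 1.
Proof.
have [A [PA Amax]] := Zorn_bigcup chain_PG.
pose G0 := [set p : E * R | exists t, p = (t *: w, t)].
have w0 : w != 0 by apply/eqP => w0; apply: Kw; rewrite w0; exact: K0.
have gG0 : good G0.
  split.
  - move=> x a b [t [] -> ->] [t' [] e ->].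
    apply/eqP; move/eqP: e; rewrite -subr_eq0 -scalerBl.
    by rewrite scaler_eq0 (negPf w0) orbF subr_eq0.
  - move=> t x y a b [t1 [-> ->]] [t2 [-> ->]]; exists (t * t1 + t2).
    by rewrite scalerDl scalerA.
  - move=> x a [t [-> ->]] Kx; rewrite leNgt; apply/negP => t1.
    apply: Kw; have := @Kconv _ _ t^-1 _ Kx K0.
    rewrite scaler0 addr0 scalerA mulVf ?scale1r; last by rewrite gt_eqF // (lt_trans ltr01).
    apply; rewrite invr_ge0 (ltW (lt_trans ltr01 t1)) /= invf_le1 ?ltW //.
    exact: (lt_trans ltr01 t1).
  - by exists 1; rewrite scale1r.
have gA : good A.
  case: PA => // A0; exfalso; apply: (Amax G0) => //; last by right.
  rewrite A0; split; first by [].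
  by move=> /(_ (w, 1)); apply; exact: gw gG0.
have dom : forall u, exists a, A (u, a).
  move=> u; apply: contrapT => nu.
  have nA : forall a, ~ A (u, a) by move=> a Aa; apply: nu; exists a.
  pose Lo := [set r : R | exists y b (s : R), [/\ A (y, b), 0 < s, K (y - s *: u) & r * s = b - 1]].
  pose Up := [set r : R | exists y b (t : R), [/\ A (y, b), 0 < t, K (y + t *: u) & r * t = 1 - b]].
  have LoUp : forall r1 r2, Lo r1 -> Up r2 -> r1 <= r2.
    move=> r1 r2 [y2 [b2 [s [A2 s0 K2 e1]]]] [y1 [b1 [t [A1 t0 K1 e2]]]].
    pose lam := s / (s + t).
    have st0 : 0 < s + t by rewrite addr_gt0.
    have lam01 : 0 <= lam <= 1.
      apply/andP; split; first by rewrite /lam divr_ge0 // ltW.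
      by rewrite /lam ler_pdivrMr // mul1r lerDl ltW.
    have := @Kconv _ _ lam lam01 K1 K2.
    have -> : lam *: (y1 + t *: u) + (1 - lam) *: (y2 - s *: u) =
              lam *: y1 + (1 - lam) *: y2.
      rewrite scalerDr scalerBr !scalerA.
      have -> : (1 - lam) * s = lam * t.
        by rewrite /lam; field; rewrite gt_eqF.
      by rewrite addrACA subrr addr0.
    move=> Kc.
    have Ac := glin gA lam _ _ _ _ A1 (goodZ (1 - lam) _ _ gA A2).
    have := gle gA _ _ Ac Kc.
    have -> : lam * b1 + (1 - lam) * b2 = (s * b1 + t * b2) / (s + t).
      by rewrite /lam; field; rewrite gt_eqF.
    rewrite ler_pdivrMr // mul1r => h.
    have h2 : (r1 - r2) * (s * t) = t * (b2 - 1) - s * (1 - b1).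
      by rewrite -e1 -e2; ring.
    have : (r1 - r2) * (s * t) <= 0 by rewrite h2; lra.
    rewrite pmulr_lle0 ?mulr_gt0 // subr_le0 //.
  have Lo0 : Lo !=set0.
    have [s s0 Ks] := Kabs (- u).
    exists (- s^-1), 0, 0, s; split => //; first exact: good00.
      by rewrite sub0r -scalerN.
    by rewrite mulNr mulVf ?gt_eqF // sub0r.
  have Up0 : Up !=set0.
    have [s s0 Ks] := Kabs u.
    exists (s^-1), 0, 0, s; split => //; first exact: good00.
      by rewrite add0r.
    by rewrite mulVf ?gt_eqF // subr0.
  have ubLo : has_ubound Lo by case: Up0 => v Uv; exists v => r Lr; exact: LoUp.
  pose al := sup Lo.
  have Loal : forall r, Lo r -> r <= al by move=> r Lr; exact: ub_le_sup.
  have alUp : forall r, Up r -> al <= r by move=> r Ur; apply: ge_sup => // r' Lr'; exact: LoUp.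
  pose B := [set p : E * R | exists y b t, A (y, b) /\ p = (y + t *: u, b + t * al)].
  have AB : A `<=` B.
    by case=> y b Ayb; exists y, b, 0; rewrite scale0r addr0 mul0r addr0.
  have gB : good B.
    split.
    - move=> x a c [y1 [b1 [t1 [A1 [] e1 ->]]]] [y2 [b2 [t2 [A2 [] e2 ->]]]].
      have [t12|t12] := eqVneq t1 t2.
        subst t2; have e : y1 = y2 by apply: (@addIr _ (t1 *: u)); rewrite -e1 -e2.
        by subst y2; rewrite (gfun gA _ _ _ A1 A2).
      exfalso; apply: (nA ((t1 - t2)^-1 * (b2 - b1))).
      have A21 := glin gA (-1) _ _ _ _ A1 A2.
      have H := goodZ ((t1 - t2)^-1) _ _ gA A21.
      have e : (t1 - t2) *: u = y2 - y1.
        rewrite scalerBl.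
        have -> : y2 - y1 = (y2 + t2 *: u) - (y1 + t2 *: u) by rewrite opprD addrACA subrr addr0.
        by rewrite -e2 e1 opprD addrACA subrr add0r.
      have eu : (t1 - t2)^-1 *: (-1 *: y1 + y2) = u.
        by rewrite scaleN1r [- y1 + y2]addrC -e scalerA mulVf ?scale1r // subr_eq0.
      have ea : (t1 - t2)^-1 * (-1 * b1 + b2) = (t1 - t2)^-1 * (b2 - b1).
        by rewrite mulN1r [- b1 + b2]addrC.
      by rewrite -eu -ea.
    - move=> t x z a c [y1 [b1 [t1 [A1 [] -> ->]]]] [y2 [b2 [t2 [A2 [] -> ->]]]].
      exists (t *: y1 + y2), (t * b1 + b2), (t * t1 + t2); split.
        exact: glin gA _ _ _ _ _ A1 A2.
      congr (_, _); last by ring.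
      by rewrite scalerDr scalerA scalerDl addrACA.
    - move=> x a [y [b [t [Ayb [] -> ->]]]] Kx.
      case: (ltrgt0P t) => t0.
      + have : Up ((1 - b) / t).
          by exists y, b, t; split => //; rewrite divfK // gt_eqF.
        move/alUp; rewrite ler_pdivlMr // => h; nra.
      + have : Lo ((b - 1) / (- t)).
          exists y, b, (- t); split => //; first by rewrite oppr_gt0.
            by rewrite scaleNr opprK.
          by rewrite divfK // gt_eqF // oppr_gt0.
        move/Loal; rewrite ler_pdivrMr ?oppr_gt0 // => h; nra.
      + subst t; move: Kx; rewrite scale0r addr0 mul0r addr0 => Kx.
        exact: gle gA _ _ Ayb Kx.
    - exact: AB (gw gA).
  apply: (Amax B) => //; last by right.
  split => // BA; apply: (nA al).
  have : B (u, al) by exists 0, 0, 1; split; [exact: good00 gA | by rewrite add0r scale1r add0r mul1r].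
  by move/BA.
pose l x := projT1 (cid (dom x)).
have Al x : A (x, l x) by rewrite /l; case: (cid (dom x)).
exists l; split; last split.
- move=> a u v; exact: (gfun gA _ _ _ (Al _) (glin gA a _ _ _ _ (Al u) (Al v))).
- move=> x Kx; exact: gle gA _ _ (Al x) Kx.
- exact: gfun gA _ _ _ (Al w) (gw gA).
Qed.

End HB.
Local Open Scope convex_scope.

Section Top.
Variables (R : realType) (E : tvsType R).

Definition linR (l : E -> R) := forall (a : R) (u v : E), l (a *: u + v) = a * l u + l v.

Lemma lin0 l : linR l -> l 0 = 0.
Proof. by move=> hl; have := hl (-1) 0 0; rewrite scaler0 addr0 mulN1r addNr. Qed.
Lemma linD l : linR l -> forall x y, l (x + y) = l x + l y.
Proof. by move=> hl x y; rewrite -[x]scale1r hl mul1r scale1r. Qed.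
Lemma linZ l : linR l -> forall a x, l (a *: x) = a * l x.
Proof. by move=> hl a x; rewrite -[a *: x]addr0 hl lin0 // addr0. Qed.
Lemma linN l : linR l -> forall x, l (- x) = - l x.
Proof. by move=> hl x; rewrite -scaleN1r linZ // mulN1r. Qed.
Lemma linB l : linR l -> forall x y, l (x - y) = l x - l y.
Proof. by move=> hl x y; rewrite linD // linN. Qed.

Lemma absorb (V : set E) : nbhs 0 V -> forall x, exists2 s : R, 0 < s & V (s *: x).
Proof.
move=> V0 x.
have := @scale_continuous R E (0, x) V; rewrite /= scale0r => /(_ V0).
case=> -[A B] /= [nA nB] AB.
case/nbhs_ballP: nA => e /= e0 He.
exists (e / 2); first by rewrite divr_gt0.
apply: (AB (e / 2, x)); split => /=; last exact: nbhs_singleton.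
apply: He; rewrite /ball /= sub0r normrN gtr0_norm ?divr_gt0 //.
by rewrite ltr_pdivrMr // ltr_pMr // ltr1n.
Qed.

Definition convS (V : set E) := forall x y (t : R), 0 <= t <= 1 -> V x -> V y ->
  V (t *: x + (1 - t) *: y).

Lemma nbhs_convex (N : set E) : nbhs 0 N ->
  exists V, [/\ nbhs 0 V, V `<=` N & convS V].
Proof.
move=> N0; have [B Bconv [Bopen Bb]] := @locally_convex R E.
have [U [BU U0] UN] := Bb 0 N N0.
exists U; split => //.
  by apply: open_nbhs_nbhs; split => //; exact: Bopen.
move=> x y t /andP[t0 t1] Ux Uy.
have := Bconv U (mem_set BU) x y (Itv01 t0 t1) (mem_set Ux) (mem_set Uy).
by rewrite inE.
Qed.


Lemma cont_lin (l : E -> R) (V : set E) : linR l -> nbhs 0 V ->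
  (forall v, V v -> l v <= 1) -> continuous l.
Proof.
move=> hl V0 lV.
pose W := V `&` (-%R @` V).
have W0 : nbhs 0 W by apply: filterI => //; exact: nbhs0N.
have lW : forall v, W v -> `|l v| <= 1.
  move=> v [Vv [v' Vv' e]]; rewrite ler_norml lV // andbT.
  by rewrite -e linN // lerNl opprK lV.
move=> x; apply/cvgrPdist_lt => eps eps0.
have e20 : eps / 2 != 0 by rewrite gt_eqF // divr_gt0.
have := nbhsT x (nbhs0Z e20 W0).
apply: filterS => _ [_ [v Wv <-] <-] /=.
rewrite linD // linZ // opprD addNKr normrN normrM gtr0_norm ?divr_gt0 //.
have := lW _ Wv => h.
have : eps / 2 * `|l v| <= eps / 2 by rewrite ler_piMr // ltW // divr_gt0.
move=> h2; apply: (le_lt_trans h2).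
by rewrite ltr_pdivrMr // ltr_pMr // ltr1n.
Qed.

Lemma core (K : set E) (c : E) (V : set E) (w : E) : convS K -> nbhs 0 V ->
  (forall v, V v -> K (c + v)) -> ~ K w ->
  exists l, is_dual l /\ (forall k, K k -> l k <= l w) /\ l c < l w.
Proof.
move=> Kc V0 VK Kw.
pose K' := [set x : E | K (c + x)].
have K'c : forall x y (t : R), 0 <= t <= 1 -> K' x -> K' y ->
  K' (t *: x + (1 - t) *: y).
  move=> x y t t01 Kx Ky; rewrite /K' /=.
  have -> : c + (t *: x + (1 - t) *: y) = t *: (c + x) + (1 - t) *: (c + y).
    by rewrite !scalerDr addrACA -scalerDl [t + _]addrC subrK scale1r.
  exact: Kc.
have K'a : forall x, exists2 s : R, 0 < s & K' (s *: x).
  by move=> x; have [s s0 Vs] := @absorb V V0 x; exists s => //; exact: VK.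
have K'w : ~ K' (w - c) by rewrite /K' /= addrC subrK.
have [l [hl [lK lw]]] := @HB_alg R E K' K'c K'a _ K'w.
have lc : continuous l by apply: (@cont_lin l V hl V0) => v Vv; apply: lK; exact: VK.
exists l; split; first by split.
split.
  move=> k Kk; have : K' (k - c) by rewrite /K' /= addrC subrK.
  by move/lK; rewrite linB // -lw linB // lerD2r.
by move: lw; rewrite linB // => h; lra.
Qed.


Lemma sep (A : set E) (a0 z : E) (N : set E) : convS A -> A a0 -> nbhs z N ->
  (forall a, A a -> ~ N a) ->
  exists l (d : R), [/\ is_dual l, 0 < d & forall a, A a -> l a <= l z - d].
Proof.
move=> Ac Aa0 Nz AN.
have N'0 : nbhs 0 [set v | N (z + v)].
  have := @nbhsB R E N z (- z) Nz; rewrite addNr.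
  by apply: filterS => _ [n Nn <-]; rewrite /= addrA subrr add0r.
have [V [V0 VN Vc]] := nbhs_convex N'0.
pose K := [set k | exists a v, [/\ A a, V v & k = a - v]].
have Kc : convS K.
  move=> _ _ t t01 [a1 [v1 [A1 V1 ->]]] [a2 [v2 [A2 V2 ->]]].
  exists (t *: a1 + (1 - t) *: a2), (t *: v1 + (1 - t) *: v2); split.
  - exact: Ac.
  - exact: Vc.
  - by rewrite !scalerBr addrACA -opprD.
have V'0 := nbhs0N V0.
have VK : forall v, (-%R @` V) v -> K (a0 + v).
  by move=> _ [v Vv <-]; exists a0, v.
have Kz : ~ K z.
  move=> [a [v [Aa Vv e]]]; apply: (AN a Aa).
  by have := VN v Vv; rewrite /= e subrK.
have [l [ld [lK lc]]] := core Kc V'0 VK Kz.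
have [s s0 Vs] := @absorb V V0 (a0 - z).
have hl : linR l by case: ld.
exists l, (s * (l z - l a0)); split => //.
  by rewrite mulr_gt0 // subr_gt0.
move=> a Aa; have : K (a - s *: (a0 - z)) by exists a, (s *: (a0 - z)).
by move/lK; rewrite linB // linZ // linB // => h; lra.
Qed.

End Top.

Lemma pairE (R : realType) (Y : tvsType R) (y : Y) (r : R) :
  (y, r : R^o) = r *: ((0:Y), (1:R^o)) + (y, 0).
Proof.
congr pair => /=; first by rewrite scaler0 add0r.
by rewrite addr0 [in RHS]/GRing.scale /=; exact: (esym (mulr1 _)).
Qed.

Lemma sub (R : realType) (Y : tvsType R) (K : set (Y * R^o)) (V : set Y) (a b : R) :
  convS K -> nbhs 0 V -> (forall y (r : R), V y -> r <= a -> K (y, r)) -> ~ K (0, b) ->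
  exists ys : Y -> R, is_dual ys /\ forall y (r : R), K (y, r) -> r + ys y <= b.
Proof.
move=> Kc V0 VK Kb.
have ab : a < b.
  rewrite ltNge; apply/negP => ba; apply: Kb; apply: VK => //; exact: nbhs_singleton.
pose W := [set p : Y * R^o | V p.1 /\ `|p.2| < 1].
have W0 : nbhs (0 : Y * R^o) W.
  exists (V, [set r : R^o | `|r| < 1]) => /=.
    split => //; apply/nbhs_ballP; exists 1 => //= r; rewrite /ball /= sub0r normrN //.
  by case=> y r [].
have WK : forall p, W p -> K ((0 : Y, (a - 1 : R^o)) + p).
  case=> y r [/= Vy r1].
  have -> : ((0 : Y), (a - 1 : R^o)) + (y, r) = (y, a - 1 + r) by congr pair; rewrite /= ?add0r.
  apply: VK => //.
  move: r1; rewrite ltr_norml => /andP[_ r1]; rewrite -addrA -[leRHS]addr0 lerD2l addrC subr_le0 ltW //.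
have [L [[hL Lc] [LK Lcw]]] := core Kc W0 WK Kb.
pose lam := L (0, 1).
have Lyr : forall y (r : R), L (y, r) = L (y, 0) + r * lam.
  by move=> y r; rewrite pairE hL addrC.
have L00 : L (0, 0) = 0 by exact: lin0 hL.
have lam0 : 0 < lam.
  have a1 : a - 1 < b by apply: lt_trans ab; rewrite ltrBlDr ltrDl ltr01.
  move: Lcw; rewrite Lyr [X in _ < X]Lyr ltrD2l -subr_gt0 -mulrBl pmulr_rgt0 // subr_gt0 //.
exists (fun y => lam^-1 * L (y, 0)); split.
  split.
    move=> c u v /=.
    have -> : (c *: u + v, 0 : R^o) = c *: (u, 0 : R^o) + (v, 0).
      by congr pair => /=; rewrite ?scaler0 ?addr0 //; rewrite [in RHS]/GRing.scale /= mulr0 addr0.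
    by rewrite hL mulrDr mulrCA.
  move=> y; apply: (@continuous_comp _ _ _ (fun y => L (y, 0)) ( *%R lam^-1)); last first.
    exact: mulrl_continuous.
  apply: (@continuous_comp _ _ _ (fun y : Y => (y, 0 : R^o)) L); last exact: Lc.
  apply: (@cvg_pair _ _ _ (nbhs y) (nbhs y) (nbhs (0:R^o))); [exact: cvg_id | exact: cvg_cst].
move=> y r Kyr; have := LK _ Kyr; rewrite Lyr [X in _ <= X]Lyr L00 add0r => h.
rewrite -(ler_pM2r lam0) mulrDl mulrAC mulVf ?gt_eqF // mul1r addrC //.
Qed.

Lemma le_from_lt (R : realType) (x y : R) : (forall r, r < x -> r <= y) -> x <= y.
Proof.
move=> H; rewrite leNgt; apply/negP => yx.
have := H ((x + y) / 2) ltac:(lra); lra.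
Qed.

Lemma convg (R : realType) (W Z : tvsType R) (g : W -> set Z) :
  setfun_convex g -> forall w1 w2 z1 z2 (t : R), 0 <= t <= 1 -> g w1 z1 -> g w2 z2 ->
  g (t *: w1 + (1 - t) *: w2) (t *: z1 + (1 - t) *: z2).
Proof.
move=> gc w1 w2 z1 z2 t /andP[t0 t1] g1 g2.
have [->|tn0] := eqVneq t 0.
  by rewrite !scale0r !add0r subr0 !scale1r.
have [->|tn1] := eqVneq t 1.
  by rewrite !scale1r subrr !scale0r !addr0.
apply: gc; last by exists z1 => //; exists z2.
by rewrite lt_neqAle eq_sym tn0 t0 /= lt_neqAle tn1 t1.
Qed.

Lemma dual0 (R : realType) (E : tvsType R) : is_dual (fun _ : E => (0 : R)).
Proof. by split; [move=> *; rewrite mulr0 addr0 | exact: cst_continuous]. Qed.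

Lemma closure_le (R : realType) (Z : tvsType R) (zs : Z -> R) (A : set Z) (b : R) :
  continuous zs -> (forall u, A u -> zs u <= b) -> forall u, closure A u -> zs u <= b.
Proof.
move=> zc Ab u Au.
have cl : closed (zs @^-1` [set r | r <= b]).
  by apply: preimage_closed; [move=> x _; exact: zc | exact: closed_le].
have sub : closure A `<=` zs @^-1` [set r | r <= b].
  rewrite [X in _ `<=` X](closure_id _).1 //; apply: closureS => v Av; exact: Ab.
exact: sub _ Au.
Qed.

Section Main.
Variables (R : realType) (X Y Z : tvsType R) (C : set Z) (f : X * Y -> set Z) (x0 : X).
Hypotheses (hC : closed_convex_cone C) (hfF : forall p, in_FZC C (f p))
  (hfconv : setfun_convex f) (hx0 : sdom f (x0, 0))
  (husc : forall zs : Z -> R, in_Cminus0 C zs ->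
     usc_at (scalarization (fun y : Y => f (x0, y)) zs) 0).

Definition M0 := \bigcup_(x in [set: X]) f (x, 0).

Lemma M0conv : convS M0.
Proof.
move=> m1 m2 t t01 [x1 _ f1] [x2 _ f2]; exists (t *: x1 + (1 - t) *: x2) => //.
have := convg hfconv t01 f1 f2.
have -> : (t *: x1 + (1 - t) *: x2, (0:Y)) = t *: (x1, (0:Y)) + (1 - t) *: (x2, 0) by
  congr pair => /=; rewrite !scaler0 addr0.
by [].
Qed.

Lemma negbound (ys : Y -> R) (zs : Z -> R) (b : R) : is_dual ys -> is_dual zs ->
  (forall x y w, f (x, y) w -> zs w + ys y <= b) ->
  forall u, negconj f (fun _ => 0) ys zs u -> zs u <= b.
Proof.
move=> [yl yc] [zl zc] hb; apply: (closure_le zc).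
move=> u [[x y] _ [w fw [s Ss <-]]].
move: Ss; rewrite /Shalf /= add0r linN // => Ss.
rewrite linD //; apply: le_trans (hb _ _ _ fw); rewrite lerD2l.
by move: Ss; rewrite addrC subr_le0.
Qed.

Lemma M0sub (ys : Y -> R) (zs : Z -> R) : is_dual ys -> is_dual zs ->
  forall u, closure M0 u -> negconj f (fun _ => 0) ys zs u.
Proof.
move=> [yl yc] [zl zc]; apply: closureS => m [x _ fm].
exists (x, 0) => //; exists m => //; exists 0; last by rewrite addr0.
by rewrite /Shalf /= oppr0 (lin0 yl) (lin0 zl) !addr0.
Qed.

Lemma key (z : Z) : ~ closure M0 z ->
  exists l (b : R), [/\ in_Cminus0 C l, (forall m, M0 m -> l m <= b) & b < l z].
Proof.
move=> nz.
have [m0 fm0] := hx0.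
have M0m0 : M0 m0 by exists x0.
have [N [Nz NM]] : exists N, nbhs z N /\ ~ (M0 `&` N !=set0).
  apply: contrapT => h; apply: nz => B Bz; apply: contrapT => nB; apply: h; by exists B.
have MN : forall a, M0 a -> ~ N a by move=> a Ma Na; apply: NM; exists a.
have [l [d [ld d0 lb]]] := sep M0conv M0m0 Nz MN.
have [hl lc] := ld.
exists l, (l z - d); split => //; last by rewrite ltrBlDr ltrDl.
split => //; split.
  move=> c Cc; rewrite leNgt; apply/negP => lc0.
  case: hC => Ccl [C0 [Ccone Cconv]].
  pose D := l z - d - l m0.
  have D0 : 0 <= D by rewrite /D subr_ge0; exact: lb.
  pose t := (D + 1) / l c.
  have t0 : 0 <= t by apply: divr_ge0; [exact: addr_ge0 | exact: ltW].
  have : f (x0, 0) (m0 + t *: c).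
    rewrite (hfF (x0, 0)); apply: subset_closure; exists m0 => //.
    by exists (t *: c) => //; exact: Ccone.
  move=> fmc; have := lb _ (ex_intro2 _ _ x0 I fmc : M0 (m0 + t *: c)).
  rewrite linD // linZ // /t divfK ?gt_eqF // /D => h.
  lra.
move=> l0; have := lb _ M0m0; rewrite l0 /= sub0r => h.
by move: d0; rewrite -oppr_lt0 => /(lt_le_trans) /(_ h); rewrite ltxx.
Qed.

Lemma ysex (zs : Z -> R) : in_Cminus0 C zs -> exists ys : Y -> R, is_dual ys /\
  forall b, (forall m, M0 m -> zs m <= b) -> forall x y w, f (x, y) w -> zs w + ys y <= b.
Proof.
move=> hz; have [[zl zc] _] := hz.
have [m0 fm0] := hx0.
have M0m0 : M0 m0 by exists x0.
case: (pselect (exists b, forall m, M0 m -> zs m <= b)) => [[b0 hb0]|nb]; last first.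
  exists (fun _ => 0); split; first exact: dual0.
  by move=> b hb; exfalso; apply: nb; exists b.
pose S := [set zs m | m in M0].
have Sub : has_ubound S by exists b0 => _ [m Mm <-]; exact: hb0.
have S0 : S !=set0 by exists (zs m0); exists m0.
pose bs := sup S.
pose K := [set p : Y * R^o | exists x w, f (x, p.1) w /\ p.2 < zs w].
have Kc : convS K.
  move=> p1 p2 t /[dup] t01 /andP[t0 t1] [x1 [w1 [f1 r1]]] [x2 [w2 [f2 r2]]].
  exists (t *: x1 + (1 - t) *: x2), (t *: w1 + (1 - t) *: w2); split.
    exact: (convg hfconv t01 f1 f2).
  rewrite zl linZ //=.
  change (t * p1.2 + (1 - t) * p2.2 < t * zs w1 + (1 - t) * zs w2).
  have [->|tp] := eqVneq t 0; first by rewrite !mul0r !add0r subr0 !mul1r.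
  apply: ltr_leD; first by rewrite ltr_pM2l // lt_neqAle eq_sym tp t0.
  by apply: ler_wpM2l; [rewrite subr_ge0 | exact: ltW].
have [V V0 HV] : exists2 V, nbhs 0 V &
    forall y, V y -> (scalarization (fun y : Y => f (x0, y)) zs y < (- zs m0 + 1)%:E)%E.
  apply: (husc hz); apply: (le_lt_trans (y := (- zs m0)%:E)).
    by apply: ereal_inf_lbound; exists m0.
  by rewrite lte_fin ltrDl.
have VK : forall y (r : R), V y -> r <= zs m0 - 2 -> K (y, r).
  move=> y r Vy r2; have := HV y Vy; move/ereal_inf_lt => [_ [z fz <-]].
  rewrite lte_fin => hzz; exists x0, z; split => //=.
  apply: (le_lt_trans r2); rewrite -(ltrN2 (zs z)) (lt_trans hzz) //.
  by rewrite opprB [- zs m0 + 1]addrC ltrD2r ltr1n.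
have Kb : ~ K (0, bs).
  move=> [x [w [fw bw]]]; move: bw => /=; apply/negP; rewrite -leNgt.
  by apply: ub_le_sup => //; exists w => //; exists x.
have [ys [hys Hys]] := sub Kc V0 VK Kb.
exists ys; split => // b hb x y w fw.
have bsb : bs <= b by apply: ge_sup => // _ [m Mm <-]; exact: hb.
apply: le_trans bsb; rewrite -lerBrDr; apply: le_from_lt => r rw.
by rewrite lerBrDr; apply: Hys; exists x, w.
Qed.


End Main.

Unset Implicit Arguments.
Local Close Scope convex_scope.

Theorem mainTheorem1 (R : realType) (X Y Z : tvsType R)
  (hX : hausdorff_space X) (hY : hausdorff_space Y) (hZ : hausdorff_space Z)
  (C : set Z) (hC : closed_convex_cone C) (hCZ : C <> [set: Z])
  (f : X * Y -> set Z) (hfF : forall p, in_FZC C (f p))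
  (hfconv : setfun_convex f)
  (x0 : X) (hx0 : sdom f (x0, 0))
  (husc : forall zs : Z -> R, in_Cminus0 C zs ->
     usc_at (scalarization (fun y : Y => f (x0, y)) zs) 0) :
  marginalX f 0 =
    [set z | forall (ys : Y -> R) (zs : Z -> R), is_dual ys -> in_Cminus0 C zs ->
       negconj f (fun _ => 0) ys zs z]
  /\
  exists yfam : (Z -> R) -> (Y -> R),
    (forall zs, in_Cminus0 C zs -> eproper (scalarization f zs) -> is_dual (yfam zs)) /\
    marginalX f 0 =
      [set z | forall zs : Z -> R, in_Cminus0 C zs -> eproper (scalarization f zs) ->
         negconj f (fun _ => 0) (yfam zs) zs z].
Proof.
have ex : forall zs : Z -> R, exists ys : Y -> R, in_Cminus0 C zs -> is_dual ys /\
    forall b, (forall m, M0 f m -> zs m <= b) ->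
      forall x y w, f (x, y) w -> zs w + ys y <= b.
  move=> zs; case: (pselect (in_Cminus0 C zs)) => hz; last by exists (fun _ => 0).
  have [ys hys] := ysex hfconv hx0 husc hz; by exists ys.
pose yfam zs := projT1 (cid (ex zs)).
have hyf : forall zs, in_Cminus0 C zs -> is_dual (yfam zs) /\
    forall b, (forall m, M0 f m -> zs m <= b) ->
      forall x y w, f (x, y) w -> zs w + yfam zs y <= b.
  by move=> zs; exact: (projT2 (cid (ex zs))).
have sep_z : forall z, ~ closure (M0 f) z -> exists l, [/\ in_Cminus0 C l,
    eproper (scalarization f l) & ~ negconj f (fun _ => 0) (yfam l) l z].
  move=> z nz; have [l [b [hl lb blz]]] := key hC hfF hfconv hx0 nz.
  have [yd yb] := hyf l hl; have B := yb b lb.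
  exists l; split => //.
  - split.
    + move=> [x y] e.
      have : (((yfam l) y - b)%:E <= scalarization f l (x, y))%E.
        apply/ereal_infP => _ [w fw <-]; rewrite lee_fin.
        have := B x y w fw; move=> h; lra.
      by rewrite e.
    + exists (x0, 0); have [m0 fm0] := hx0; move=> e.
      have : (scalarization f l (x0, (0%R : Y)) <= (- l m0)%:E)%E.
        by apply: ereal_inf_lbound; exists m0.
      by rewrite e.
  - move=> nc; have := negbound yd hl.1 B nc; rewrite leNgt blz.
    by [].
split.
- apply/seteqP; split => z.
  + move=> hz ys zs hy hzs; apply: (M0sub (f:=f) hy hzs.1); exact: hz.
  + move=> H; apply: contrapT => nz; have [l [hl _ nc]] := sep_z z nz.
    by apply: nc; apply: H => //; exact: (hyf l hl).1.
- exists yfam; split; first by move=> zs hz _; exact: (hyf zs hz).1.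
  apply/seteqP; split => z.
  + move=> hz zs hzs _; apply: (M0sub (f:=f) (hyf zs hzs).1 hzs.1); exact: hz.
  + move=> H; apply: contrapT => nz; have [l [hl hp nc]] := sep_z z nz.
    exact: nc (H l hl hp).
Qed.
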